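(* Let $G$ be a Hausdorff topological group, $(g_n)_{n\in\mathbb N}$ a sequence of pairwise distinct elements of $G$, and $A=\{g_1,g_2,\dots\}$. Consider: (ap1) $A$ is absolutely productive in $G$; (ap2) for every injection $\sigma:\mathbb N\to\mathbb N$ the sequence $(g_{\sigma(n)})_n$ is hyper-multipliable in $G$; (ap3) for every bijection $\sigma:\mathbb N\to\mathbb N$ the sequence $(g_{\sigma(n)})_n$ is hyper-multipliable in $G$; (ap4) $(g_n)_n$ is hyper-multipliable in $G$. Then (a) (ap1), (ap2), (ap3) are equivalent and imply (ap4); (b) if $G$ is abelian, then (ap1)–(ap4) are all equivalent.
   Context: $\prod_{k=1}^n a_k=a_1\cdots a_n$. A sequence $(g_n)$ in $G$ is hyper-multipliable if for every integer sequence $(m_n)$ the sequence $\left(\prod_{k=1}^n g_k^{m_k}\right)_n$ converges in $G$. A subset $A\subset G$ is absolutely productive in $G$ if every sequence of pairwise distinct elements of $A$ is hyper-multipliable in $G$. *)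

(* Defs.v *)
From Stdlib Require Import ZArith.

Set Implicit Arguments.

Record TopGroup := {
  carrier :> Type;
  mul : carrier -> carrier -> carrier;
  inv : carrier -> carrier;
  one : carrier;
  mulA : forall x y z, mul x (mul y z) = mul (mul x y) z;
  mul1g : forall x, mul one x = x;
  mulg1 : forall x, mul x one = x;
  mulVg : forall x, mul (inv x) x = one;
  mulgV : forall x, mul x (inv x) = one;
  is_open : (carrier -> Prop) -> Prop;
  open_full : is_open (fun _ => True);
  open_inter : forall U V, is_open U -> is_open V -> is_open (fun x => U x /\ V x);
  open_union : forall (I : Type) (F : I -> carrier -> Prop),
      (forall i, is_open (F i)) -> is_open (fun x => exists i, F i x);
  mul_cont : forall x y W, is_open W -> W (mul x y) ->
      exists U V, is_open U /\ is_open V /\ U x /\ V y /\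
        (forall u v, U u -> V v -> W (mul u v));
  inv_cont : forall W, is_open W -> is_open (fun x => W (inv x))
}.

Definition hausdorff (G : TopGroup) : Prop :=
  forall x y : G, x <> y ->
    exists U V : G -> Prop, is_open G U /\ is_open G V /\ U x /\ V y /\
      (forall z, U z -> V z -> False).

Definition abelian (G : TopGroup) : Prop :=
  forall x y : G, mul G x y = mul G y x.

Definition zpow (G : TopGroup) (g : G) (m : Z) : G :=
  match m with
  | Z0 => one G
  | Zpos p => Pos.iter (fun y => mul G y g) (one G) p
  | Zneg p => Pos.iter (fun y => mul G y (inv G g)) (one G) p
  end.

(** Sequences indexed by nat (index 0 plays the role of 1). *)
Definition converges_to (G : TopGroup) (s : nat -> G) (x : G) : Prop :=
  forall U : G -> Prop, is_open G U -> U x -> exists N, forall n, (N <= n)%nat -> U (s n).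

Definition converges (G : TopGroup) (s : nat -> G) : Prop :=
  exists x, @converges_to G s x.

Fixpoint partial_prod (G : TopGroup) (g : nat -> G) (m : nat -> Z) (n : nat) : G :=
  match n with
  | O => one G
  | S k => mul G (@partial_prod G g m k) (@zpow G (g k) (m k))
  end.

Definition hyper_multipliable (G : TopGroup) (g : nat -> G) : Prop :=
  forall m : nat -> Z, @converges G (@partial_prod G g m).

Definition injective_seq {T : Type} (s : nat -> T) : Prop :=
  forall i j, s i = s j -> i = j.

Definition absolutely_productive (G : TopGroup) (A : G -> Prop) : Prop :=
  forall s : nat -> G, injective_seq s -> (forall n, A (s n)) ->
    @hyper_multipliable G s.

Definition bijective_nat (f : nat -> nat) : Prop :=
  injective_seq f /\ forall j, exists i, f i = j.

(* Main.v *)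
Require Import Defs.
From Stdlib Require Import ZArith Lia Classical ClassicalEpsilon FunctionalExtensionality.

Arguments partial_prod {G} g m n.
Arguments zpow {G} g m.
Arguments converges_to {G} s x.
Arguments converges {G} s.
Arguments hyper_multipliable {G} g.

Lemma pp_ext (G:TopGroup) (h : nat -> G) f f' L :
  (forall j, (j < L)%nat -> f j = f' j) -> partial_prod h f L = partial_prod h f' L.
Proof. induction L; intros H; simpl; auto. rewrite IHL by (intros; apply H; lia).
  rewrite H by lia. reflexivity. Qed.

Fixpoint Rl {G:TopGroup} (h : nat -> G) (e : nat -> Z) (a k : nat) : G :=
  match k with O => one G | S k' => mul G (Rl h e a k') (zpow (h (a+k')%nat) (e (a+k')%nat)) end.

Lemma pp_split (G:TopGroup) (h : nat -> G) e a k :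
  partial_prod h e (a+k) = mul G (partial_prod h e a) (Rl h e a k).
Proof. induction k; simpl. rewrite Nat.add_0_r, mulg1; auto.
  rewrite Nat.add_succ_r; simpl. rewrite IHk, mulA. reflexivity. Qed.

Lemma Rl_ext (G:TopGroup) (h : nat -> G) e e' a k :
  (forall t, (t < k)%nat -> e (a+t)%nat = e' (a+t)%nat) -> Rl h e a k = Rl h e' a k.
Proof. induction k; intros H; simpl; auto. rewrite IHk by (intros; apply H; lia).
  rewrite H by lia. reflexivity. Qed.

Lemma cauchy {G:TopGroup} (s : nat -> G) y : converges_to s y -> forall W, is_open G W -> W (one G) ->
  exists N, forall a b, (N <= a)%nat -> (N <= b)%nat -> W (mul G (inv G (s a)) (s b)).
Proof.
  intros Hc W HW H1.
  destruct (mul_cont G (inv G y) y W HW) as (U & V & HU & HV & Uy & Vy & HUV).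
  { rewrite mulVg; auto. }
  destruct (Hc (fun x => U (inv G x) /\ V x)) as [N HN].
  { apply open_inter; auto. apply inv_cont; auto. }
  { auto. }
  exists N; intros a b Ha Hb. apply HUV; [apply (HN a Ha) | apply (HN b Hb)].
Qed.

Fixpoint Mseq (F : nat -> nat * nat * (nat -> Z)) (i : nat) : nat :=
  match i with O => O | S i' => (fst (fst (F (Mseq F i'))) + snd (fst (F (Mseq F i'))) + 1)%nat end.

Lemma tail (G:TopGroup) (h : nat -> G) : hyper_multipliable h -> forall W, is_open G W -> W (one G) ->
  exists M, forall e a k, (M <= a)%nat -> W (Rl h e a k).
Proof.
  intros Hm W HW H1.
  apply NNPP; intro Hn.
  assert (HF : forall M, exists t : nat * nat * (nat -> Z),
     (M <= fst (fst t))%nat /\ ~ W (Rl h (snd t) (fst (fst t)) (snd (fst t)))).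
  { intro M. apply NNPP; intro H2. apply Hn. exists M. intros e a k Ha.
    apply NNPP; intro H3. apply H2. exists (a,k,e). simpl. auto. }
  set (F := fun M => proj1_sig (constructive_indefinite_description _ (HF M))).
  assert (HFp : forall M, (M <= fst (fst (F M)))%nat /\ ~ W (Rl h (snd (F M)) (fst (fst (F M))) (snd (fst (F M))))).
  { intro M. unfold F. exact (proj2_sig (constructive_indefinite_description _ (HF M))). }
  clearbody F.
  assert (Hinc : forall i, (Mseq F i < Mseq F (S i))%nat).
  { intro i. simpl. destruct (HFp (Mseq F i)). lia. }
  assert (Hmono : forall i i', (i < i')%nat -> (Mseq F (S i) <= Mseq F i')%nat).
  { intros i i' H. induction H. lia. specialize (Hinc m). lia. }
  assert (Hge : forall i, (i <= Mseq F i)%nat).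
  { induction i. lia. specialize (Hinc i). lia. }
  assert (Hex : forall j, exists i, (Mseq F i <= j < Mseq F (S i))%nat).
  { induction j. exists O. specialize (Hinc O). simpl Mseq at 1. lia.
    destruct IHj as [i Hi]. destruct (Nat.eq_dec (S j) (Mseq F (S i))) as [E|E].
    - exists (S i). specialize (Hinc (S i)). lia.
    - exists i. lia. }
  assert (Huniq : forall i i' j, (Mseq F i <= j < Mseq F (S i))%nat ->
              (Mseq F i' <= j < Mseq F (S i'))%nat -> i = i').
  { intros i i' j A B. destruct (Nat.lt_trichotomy i i') as [C|[C|C]]; auto.
    - specialize (Hmono _ _ C). lia.
    - specialize (Hmono _ _ C). lia. }
  set (blk := fun j => proj1_sig (constructive_indefinite_description _ (Hex j))).
  assert (Hblk : forall j, (Mseq F (blk j) <= j < Mseq F (S (blk j)))%nat).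
  { intro j. unfold blk. exact (proj2_sig (constructive_indefinite_description _ (Hex j))). }
  clearbody blk.
  set (e' := fun j => snd (F (Mseq F (blk j))) j).
  destruct (Hm e') as [y Hy].
  destruct (cauchy _ _ Hy W HW H1) as [N HN].
  destruct (HFp (Mseq F N)) as [Ha Hnw].
  set (a := fst (fst (F (Mseq F N)))) in *.
  set (k := snd (fst (F (Mseq F N)))) in *.
  specialize (HN a (a+k)%nat).
  rewrite pp_split, mulA, mulVg, mul1g in HN.
  apply Hnw. erewrite <- Rl_ext. apply HN; specialize (Hge N); lia.
  intros t Ht. unfold e'.
  assert (blk (a+t)%nat = N) as ->.
  { apply (Huniq _ _ (a+t)%nat (Hblk _)). simpl. unfold a, k in *. lia. }
  reflexivity.
Qed.

Definition inR (s : nat -> nat) (n : nat) : bool :=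
  if excluded_middle_informative (exists k, s k = n) then true else false.

Definition step (s : nat -> nat) (st : nat * bool) : nat * bool :=
  let (n, b) := st in if b then (S n, false) else if inR s n then (S n, false) else (n, true).

Fixpoint stt (s : nat -> nat) (p : nat) : nat * bool :=
  match p with O => (O, false) | S q => step s (stt s q) end.

Definition key (st : nat * bool) : nat := (2 * fst st + (if snd st then 1 else 0))%nat.

Lemma stt_true s p n : stt s p = (n, true) -> inR s n = false.
Proof. destruct p; simpl. congruence. unfold step. destruct (stt s p) as [n' b].
  destruct b. congruence. destruct (inR s n') eqn:E; congruence. Qed.

Lemma key_step s p : (key (stt s p) < key (stt s (S p)))%nat.
Proof. simpl. unfold step. destruct (stt s p) as [n b]. destruct b; unfold key; simpl. lia.
  destruct (inR s n); simpl; lia. Qed.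

Lemma stt_inj s p q : stt s p = stt s q -> p = q.
Proof.
  assert (H : forall p q, (p < q)%nat -> (key (stt s p) < key (stt s q))%nat).
  { intros p0 q0 H. induction H. apply key_step. specialize (key_step s m). lia. }
  intro E. destruct (Nat.lt_trichotomy p q) as [C|[C|C]]; auto.
  - specialize (H _ _ C). rewrite E in H. lia.
  - specialize (H _ _ C). rewrite E in H. lia.
Qed.

Lemma stt_reach s K : exists p, (K <= p)%nat /\ stt s p = (K, false).
Proof. induction K. exists O. auto.
  destruct IHK as [p [Hp E]]. destruct (inR s K) eqn:R.
  - exists (S p). simpl. rewrite E. unfold step. rewrite R. split; auto; lia.
  - exists (S (S p)). simpl. rewrite E. unfold step. rewrite R. split; auto; lia.
Qed.

Lemma inR_false s n : inR s n = false -> ~ exists k, s k = n.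
Proof. unfold inR. destruct excluded_middle_informative; congruence. Qed.
Lemma inR_true s k : inR s (s k) = true.
Proof. unfold inR. destruct excluded_middle_informative as [_|N]; auto. exfalso; eauto. Qed.

Definition tau (s : nat -> nat) (p : nat) : nat :=
  let (n, b) := stt s p in if b then n else s n.
Definition mm (s : nat -> nat) (m : nat -> Z) (p : nat) : Z :=
  let (n, b) := stt s p in if b then 0%Z else m n.

Lemma pp_tau (G : TopGroup) (g : nat -> G) s m p :
  partial_prod (fun n => g (tau s n)) (mm s m) p =
  partial_prod (fun n => g (s n)) m (fst (stt s p) + if snd (stt s p) then 1 else 0)%nat.
Proof.
  induction p. reflexivity.
  change (stt s (S p)) with (step s (stt s p)).
  simpl partial_prod at 1. rewrite IHp. unfold tau, mm.
  destruct (stt s p) as [n b]. destruct b; simpl.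
  - rewrite mulg1. rewrite Nat.add_0_r, Nat.add_1_r. reflexivity.
  - destruct (inR s n); simpl; repeat rewrite Nat.add_0_r; repeat rewrite Nat.add_1_r; reflexivity.
Qed.

Lemma tau_bij s : injective_seq s -> bijective_nat (tau s).
Proof.
  intro Hs. split.
  - intros p q. unfold tau. destruct (stt s p) as [n b] eqn:Ep. destruct (stt s q) as [n' b'] eqn:Eq.
    pose proof (stt_true s p n) as Tp. pose proof (stt_true s q n') as Tq.
    rewrite Ep in Tp; rewrite Eq in Tq.
    destruct b, b'; intro E.
    + subst. apply (stt_inj s). congruence.
    + exfalso. apply (inR_false s n (Tp eq_refl)). eauto.
    + exfalso. apply (inR_false s n' (Tq eq_refl)). eauto.
    + apply Hs in E. subst. apply (stt_inj s). congruence.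
  - intro j. destruct (excluded_middle_informative (exists k, s k = j)) as [[k Hk]|N].
    + destruct (stt_reach s k) as [p [_ E]]. exists p. unfold tau. rewrite E. auto.
    + destruct (stt_reach s j) as [p [_ E]]. exists (S p). unfold tau. simpl. rewrite E.
      unfold step. unfold inR. destruct excluded_middle_informative. contradiction. auto.
Qed.

Lemma ap3_ap2 (G : TopGroup) (g : nat -> G) s :
  injective_seq s -> hyper_multipliable (fun n => g (tau s n)) ->
  hyper_multipliable (fun n => g (s n)).
Proof.
  intros Hs H m. destruct (H (mm s m)) as [x Hx]. exists x.
  intros U HU Ux. destruct (Hx U HU Ux) as [N HN]. exists N. intros n Hn.
  destruct (stt_reach s n) as [p [Hp E]].
  specialize (HN p ltac:(lia)). rewrite pp_tau, E in HN. simpl in HN.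
  rewrite Nat.add_0_r in HN. exact HN.
Qed.

Lemma pp_insert (G : TopGroup) (Hab : abelian G) (g : nat -> G) f f' p L :
  (p < L)%nat -> f p = 0%Z -> (forall j, j <> p -> f j = f' j) ->
  partial_prod g f' L = mul G (partial_prod g f L) (zpow (g p) (f' p)).
Proof.
  intros HpL Hp Hj. induction L. lia.
  destruct (Nat.eq_dec p L) as [->|NE].
  - simpl. rewrite Hp. simpl. rewrite mulg1. f_equal. apply pp_ext. intros; symmetry; apply Hj; lia.
  - simpl. rewrite IHL by lia. rewrite <- (Hj L) by auto.
    rewrite <- !mulA, (Hab (zpow (g p) _)). reflexivity.
Qed.

Lemma pp_zero (G : TopGroup) (g : nat -> G) f L :
  (forall j, f j = 0%Z) -> partial_prod g f L = one G.
Proof. intro H. induction L; simpl; auto. rewrite IHL, H. simpl. apply mulg1. Qed.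

Section Ab.
Variables (G : TopGroup) (Hab : abelian G) (g : nat -> G) (s : nat -> nat)
  (Hs : injective_seq s) (m : nat -> Z).

Definition ee (j : nat) : Z :=
  match excluded_middle_informative (exists k, s k = j) with
  | left H => m (proj1_sig (constructive_indefinite_description _ H))
  | right _ => 0%Z end.

Lemma ee_s k : ee (s k) = m k.
Proof. unfold ee. destruct excluded_middle_informative as [H|N].
  - destruct (constructive_indefinite_description _ H) as [k' Hk']. simpl. apply Hs in Hk'. congruence.
  - exfalso; eauto. Qed.

Lemma ee_out j : ~ (exists k, s k = j) -> ee j = 0%Z.
Proof. unfold ee. destruct excluded_middle_informative; tauto. Qed.

Definition mask (n j : nat) : Z :=
  if excluded_middle_informative (exists k, (k < n)%nat /\ s k = j) then ee j else 0%Z.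

Lemma reorder n L : (forall k, (k < n)%nat -> (s k < L)%nat) ->
  partial_prod (fun k => g (s k)) m n = partial_prod g (mask n) L.
Proof.
  revert L. induction n; intros L HL.
  - simpl. symmetry. apply pp_zero. intro j. unfold mask.
    destruct excluded_middle_informative as [[k [Hk _]]|]; [lia|auto].
  - simpl. rewrite (IHn L) by (intros; apply HL; lia).
    rewrite (pp_insert G Hab g (mask n) (mask (S n)) (s n) L).
    + unfold mask at 3. destruct excluded_middle_informative as [_|N].
      * rewrite ee_s. reflexivity.
      * exfalso. apply N. exists n. split; auto.
    + apply HL; lia.
    + unfold mask. destruct excluded_middle_informative as [[k [Hk E]]|]; auto.
      apply Hs in E. lia.
    + intros j Hj. unfold mask.
      destruct (excluded_middle_informative (exists k, (k < n)%nat /\ s k = j)) as [[k [Hk E]]|N1];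
      destruct (excluded_middle_informative (exists k, (k < S n)%nat /\ s k = j)) as [[k' [Hk' E']]|N2];
      auto.
      * exfalso. apply N2. exists k. split; auto.
      * exfalso. apply N1. exists k'. split; auto. destruct (Nat.eq_dec k' n); [subst; congruence|lia].
Qed.

Lemma cover M : exists K, forall j, (j < M)%nat -> (exists k, s k = j) -> exists k, (k < K)%nat /\ s k = j.
Proof.
  induction M. exists O. intros; lia.
  destruct IHM as [K HK].
  destruct (excluded_middle_informative (exists k, s k = M)) as [[k Hk]|N].
  - exists (S (K + k)). intros j Hj Hex. destruct (Nat.eq_dec j M).
    + subst. exists k. split; auto; lia.
    + destruct (HK j ltac:(lia) Hex) as [k' [Hk' E]]. exists k'. split; auto; lia.
  - exists K. intros j Hj Hex. destruct (Nat.eq_dec j M).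
    + subst. contradiction.
    + apply HK; auto; lia.
Qed.

Lemma bound n : exists L, forall k, (k < n)%nat -> (s k < L)%nat.
Proof. induction n. exists O; intros; lia. destruct IHn as [L HL]. exists (S (L + s n)).
  intros k Hk. destruct (Nat.eq_dec k n). subst; lia. specialize (HL k ltac:(lia)). lia. Qed.

Lemma ab_main : hyper_multipliable g -> converges (partial_prod (fun k => g (s k)) m).
Proof.
  intro H4. destruct (H4 ee) as [x Hx]. exists x.
  intros U HU Ux.
  destruct (mul_cont G x (one G) U HU) as (U1 & V1 & HU1 & HV1 & U1x & V1o & HUV).
  { rewrite mulg1; auto. }
  destruct (Hx U1 HU1 U1x) as [N1 HN1].
  destruct (tail _ _ H4 V1 HV1 V1o) as [M0 HM0].
  set (M := (N1 + M0)%nat).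
  destruct (cover M) as [K HK]. exists K. intros n Hn.
  destruct (bound n) as [L0 HL0].
  rewrite (reorder n (M + L0)) by (intros k Hk; specialize (HL0 k Hk); lia).
  rewrite pp_split. apply HUV.
  - erewrite pp_ext. apply HN1. unfold M; lia.
    intros j Hj. unfold mask. destruct excluded_middle_informative as [_|N]; auto.
    destruct (excluded_middle_informative (exists k, s k = j)) as [Hex|N'].
    + exfalso. destruct (HK j Hj Hex) as [k [Hk E]]. apply N. exists k. split; auto; lia.
    + symmetry. apply ee_out; auto.
  - apply HM0. unfold M; lia.
Qed.
End Ab.

Theorem lemma3p2 (G : TopGroup) (HG : hausdorff G) (g : nat -> G)
    (Hg : injective_seq g) :
  let A := fun x : G => exists n, g n = x in
  let ap1 := @absolutely_productive G A in
  let ap2 := forall s : nat -> nat, injective_seq s ->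
               @hyper_multipliable G (fun n => g (s n)) in
  let ap3 := forall s : nat -> nat, bijective_nat s ->
               @hyper_multipliable G (fun n => g (s n)) in
  let ap4 := @hyper_multipliable G g in
  ((ap1 <-> ap2) /\ (ap2 <-> ap3) /\ (ap1 -> ap4)) /\
  (abelian G -> (ap1 <-> ap4) /\ (ap2 <-> ap4) /\ (ap3 <-> ap4)).
Proof.
  cbv zeta.
  assert (I12 : absolutely_productive G (fun x : G => exists n, g n = x) ->
     forall s : nat -> nat, injective_seq s -> hyper_multipliable (fun n => g (s n))).
  { intros H1 s Hs. apply H1. intros i j E. apply Hs, Hg, E. intro n; eauto. }
  assert (I21 : (forall s : nat -> nat, injective_seq s -> hyper_multipliable (fun n => g (s n))) ->
     absolutely_productive G (fun x : G => exists n, g n = x)).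
  { intros H2 t Ht HA.
    set (s := fun n => proj1_sig (constructive_indefinite_description _ (HA n))).
    assert (Es : forall n, g (s n) = t n).
    { intro n. unfold s. exact (proj2_sig (constructive_indefinite_description _ (HA n))). }
    clearbody s.
    replace t with (fun n => g (s n)) by (apply functional_extensionality; auto).
    apply H2. intros i j E. apply Ht. rewrite <- !Es, E. reflexivity. }
  assert (I23 : (forall s : nat -> nat, injective_seq s -> hyper_multipliable (fun n => g (s n))) ->
     forall s : nat -> nat, bijective_nat s -> hyper_multipliable (fun n => g (s n))).
  { intros H2 s [Hs _]. auto. }
  assert (I32 : (forall s : nat -> nat, bijective_nat s -> hyper_multipliable (fun n => g (s n))) ->
     forall s : nat -> nat, injective_seq s -> hyper_multipliable (fun n => g (s n))).
  { intros H3 s Hs. apply ap3_ap2; auto. apply H3, tau_bij; auto. }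
  assert (I14 : absolutely_productive G (fun x : G => exists n, g n = x) -> hyper_multipliable g).
  { intros H1. apply H1; auto. intro n; eauto. }
  assert (I42 : abelian G -> hyper_multipliable g ->
     forall s : nat -> nat, injective_seq s -> hyper_multipliable (fun n => g (s n))).
  { intros Hab H4 s Hs m. apply ab_main; auto. }
  split.
  - split; [split; auto | split; [split; auto | auto]].
  - intro Hab. split; [|split]; split; intro H; auto.
Qed.
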